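(* Let $X$ be a finite-dimensional normed space and let $(A_n)_{n\in\mathbb N}$ be a sequence of unbounded connected subsets of $X$. Then either $\bigcap_{n\in\mathbb N}A_n=\emptyset$, or for all but finitely many $k\in\mathbb N$ and every $\varepsilon>0$ there is an infinite subset $N_k\subset\mathbb N$ such that $T_k\cap\bigcap_{n\in N_k}A_n^\varepsilon\neq\emptyset$.
   Context: For a set $A\subset X$ and $\varepsilon>0$, $A^\varepsilon=\{x\in X:\mathrm{dist}(x,A)\le\varepsilon\}$. For $k\in\mathbb N$, $T_k=\{x\in X: k\le\|x\|\le k+1\}$. *)

(* Defs.v *)
From HB Require Import structures.
From mathcomp Require Import all_boot all_order all_algebra.
From mathcomp Require Import all_classical all_reals all_analysis.
Set Implicit Arguments. Unset Strict Implicit. Unset Printing Implicit Defensive.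
Import Order.TTheory GRing.Theory Num.Theory.
Import numFieldNormedType.Exports.
Local Open Scope classical_set_scope.
Local Open Scope ring_scope.

Definition findim (R : realType) (X : normedModType R) : Prop :=
  exists (n : nat) (b : 'I_n -> X),
    forall x : X, exists c : 'I_n -> R, x = \sum_(i < n) c i *: b i.

Definition dist_set (R : realType) (X : normedModType R) (x : X) (A : set X) : R :=
  inf [set `|x - a| | a in A].

Definition enlarge (R : realType) (X : normedModType R) (A : set X) (e : R) : set X :=
  [set x | dist_set x A <= e].

Definition shell (R : realType) (X : normedModType R) (k : nat) : set X :=
  [set x | (k%:R <= `|x|) && (`|x| <= k.+1%:R)].

(* Main.v *)
Require Import Defs.
From HB Require Import structures.
From mathcomp Require Import all_boot all_order all_algebra.
From mathcomp Require Import all_classical all_reals all_analysis.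
Import Order.TTheory GRing.Theory Num.Theory.
Import numFieldNormedType.Exports.
Local Open Scope classical_set_scope.
Local Open Scope ring_scope.
Section S.
Variables (R : realType) (X : normedModType R).

Lemma dist_le (x : X) (A : set X) a :
  A a -> dist_set x A <= `|x - a|.
Proof.
move=> Aa; rewrite /dist_set; apply: ge_inf; last by exists a.
by exists 0 => _ [b _ <-].
Qed.

Definition spans {n} (b : 'I_n -> X) :=
  forall x : X, exists c : 'I_n -> R, x = \sum_(i < n) c i *: b i.
Definition indep {n} (b : 'I_n -> X) :=
  forall c : 'I_n -> R, \sum_(i < n) c i *: b i = 0 -> forall i, c i = 0.

Lemma reduce n (b : 'I_n -> X) : spans b ->
  exists m (b' : 'I_m -> X), spans b' /\ indep b'.
Proof.
elim: n b => [|n IH] b hs.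
  by exists 0%N, b; split => // c _ [].
case: (pselect (indep b)) => [hi|hni]; first by exists n.+1, b.
have [c [hc [j cj]]] : exists c : 'I_n.+1 -> R,
    \sum_i c i *: b i = 0 /\ exists j, c j != 0.
  apply: contra_notP hni => H c hc i.
  case: (eqVneq (c i) 0) => // ci; exfalso; apply: H; exists c; split => //.
  by exists i.
apply: (IH (fun i => b (lift j i))) => x.
have [d ->] := hs x.
exists (fun i => d (lift j i) - d j * (c j)^-1 * c (lift j i)).
move: hc; rewrite (bigD1_ord j) //= => /eqP; rewrite addr_eq0 => /eqP hc.
have hs' : \sum_(i < n) c (lift j i) *: b (lift j i) = - (c j *: b j).
  by rewrite hc opprK.
rewrite (bigD1_ord j) //=.
under [RHS]eq_bigr do rewrite scalerBl.
rewrite sumrB.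
under [X in _ = _ - X]eq_bigr do rewrite -scalerA.
rewrite -scaler_sumr hs' scalerN opprK scalerA -mulrA mulVf // mulr1.
by rewrite addrC.
Qed.

Definition phi {n} (b : 'I_n -> X) (c : 'rV[R]_n) : X :=
  \sum_(i < n) c ord0 i *: b i.

Lemma phiZ n (b : 'I_n -> X) k c : phi b (k *: c) = k *: phi b c.
Proof.
rewrite /phi scaler_sumr; apply: eq_bigr => i _.
by rewrite mxE scalerA.
Qed.

Lemma phiB n (b : 'I_n -> X) c c' : phi b (c - c') = phi b c - phi b c'.
Proof.
rewrite /phi -sumrB; apply: eq_bigr => i _.
by rewrite !mxE scalerBl.
Qed.

Lemma coord_le n (c : 'rV[R]_n) i : `|c ord0 i| <= `|c|.
Proof.
have /mapP[j Hj ->] : `|c ord0 i| \in [seq `|c x.1 x.2| | x : 'I_1 * 'I_n].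
  by apply/mapP; exists (ord0, i) => //=; rewrite mem_enum.
by rewrite [leRHS]/Num.norm /= mx_normrE; apply/bigmax_geP; right => /=; exists j.
Qed.

Lemma phi_lip n (b : 'I_n -> X) c :
  `|phi b c| <= `|c| * \sum_(i < n) `|b i|.
Proof.
rewrite /phi mulr_sumr; apply: le_trans (ler_norm_sum _ _ _) _.
apply: ler_sum => i _; rewrite normrZ; apply: ler_wpM2r => //.
exact: coord_le.
Qed.

Lemma phi_cont n (b : 'I_n -> X) : continuous (phi b).
Proof.
move=> c.
have FF : Filter (nbhs c) by exact: nbhs_filter.
apply/(@cvgrPdist_le _ _ _ _ FF) => e e0.
set L := \sum_(i < n) `|b i|.
have L0 : 0 <= L by apply: sumr_ge0 => i _.
have H := (@cvgrPdist_le _ _ _ _ FF id c).1 (@cvg_id _ (nbhs c)).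
have eL : 0 < e / (L + 1) by rewrite divr_gt0 // ltr_wpDl.
near=> y.
rewrite -phiB; apply: le_trans (phi_lip _ b (c - y)) _.
have : `|c - y| <= e / (L + 1) by near: y; exact: H.
rewrite ler_pdivlMr ?ltr_wpDl // => h.
apply: le_trans h; rewrite ler_wpM2l // ?lerDl //.
Unshelve. all: by end_near.
Qed.



Lemma bounded_ball_rV n (M : R) : bounded_set [set c : 'rV[R]_n | `|c| <= M].
Proof.
rewrite /= /bounded_near; near=> N => c /= hc.
apply: le_trans hc _; near: N; apply: nbhs_pinfty_ge; exact: num_real.
Unshelve. all: by end_near.
Qed.

Lemma lower n (b : 'I_n -> X) : indep b ->
  exists2 m, 0 < m & forall c, m * `|c| <= `|phi b c|.
Proof.
move=> hi.
set S := [set c : 'rV[R]_n | `|c| = 1].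
have inS c : c != 0 -> S (`|c|^-1 *: c).
  move=> c0; rewrite /S /= mx_normZ normfV normr_id mulVf //.
  by rewrite normr_eq0.
case: (pselect (S !=set0)) => [S0|S0]; last first.
  exists 1 => // c; case: (eqVneq c 0) => [->|c0]; first by rewrite normr0 mulr0.
  by exfalso; apply: S0; exists (`|c|^-1 *: c); exact: inS.
have cS : compact S.
  apply: bounded_closed_compact.
    rewrite /= /bounded_near; near=> N => c /= ->.
    near: N; apply: nbhs_pinfty_ge; exact: num_real.
  exact: ((continuous_closedP _).1 (@norm_continuous R 'rV[R]_n) _ (@closed_eq R 1)).
have cf : {within S, continuous (fun c => `|phi b c|)}.
  apply: continuous_subspaceT => c.
  exact: (continuous_comp (phi_cont _ b c) (@norm_continuous R X (phi b c))).
have [c0 /set_mem Sc0 hmin] := EVT_min_rV S0 cS cf.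
exists `|phi b c0|.
  rewrite normr_gt0; apply/eqP => h0.
  have c00 : c0 = 0.
    apply/matrixP => i j; rewrite (ord1 i) mxE.
    by apply: (hi (fun k => c0 ord0 k)).
  by move: Sc0; rewrite /S /= c00 normr0 => /eqP; rewrite eq_sym oner_eq0.
move=> c; case: (eqVneq c 0) => [->|c0n]; first by rewrite normr0 mulr0.
have := hmin _ (mem_set (inS _ c0n)); rewrite phiZ normrZ normfV normr_id.
by rewrite ler_pdivlMl ?normr_gt0 // mulrC.
Unshelve. all: by end_near.
Qed.
Lemma unb_inf (N : set nat) : (forall J, exists j, (J <= j)%N /\ N j) -> infinite_set N.
Proof.
move=> H /finite_seqP [s hs].
have [j [hj Nj]] := H (\max_(i <- s) i).+1.
rewrite hs /= in Nj.
have := @leq_bigmax_seq _ s xpredT (fun i => i) j Nj isT.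
by rewrite leqNgt hj.
Qed.

Lemma cluster_seq n (c : nat -> 'rV[R]_n) (M d : R) :
  (forall j, `|c j| <= M) -> 0 < d ->
  exists N : set nat, infinite_set N /\
    forall j j', N j -> N j' -> `|c j - c j'| < d.
Proof.
move=> hc d0.
set B := [set x : 'rV[R]_n | `|x| <= M].
have cB : compact B.
  apply: bounded_closed_compact; first exact: bounded_ball_rV.
  exact: ((continuous_closedP _).1 (@norm_continuous R 'rV[R]_n) _ (@closed_le R M)).
have FB : (c @ \oo) B by exists 0%N => // j _; exact: hc.
have [p [Bp clp]] := cB _ (fmap_proper_filter c eventually_filter) FB.
exists [set j | `|p - c j| < d / 2]; split.
  apply: unb_inf => J.
  have FA : (c @ \oo) (c @` [set j | (J <= j)%N]).
    by exists J => // j hj; exists j.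
  have [y [[j hj <-] hb]] := clp _ _ FA (nbhsx_ballx p (d / 2) ltac:(by rewrite divr_gt0)).
  exists j; split => //.
  by move: hb; rewrite -ball_normE.
move=> j j' /= hj hj'.
rewrite (_ : c j - c j' = (p - c j') - (p - c j)); last by rewrite [in RHS]opprB [in RHS]addrC [in RHS]addrA subrK.
apply: le_lt_trans (ler_normB _ _) _.
by rewrite (splitr d) ltrD // addrC.
Qed.

Lemma shell_hit (A : set X) (x0 : X) (k : nat) :
  connected A -> ~ bounded_set A -> A x0 -> `|x0| <= k%:R ->
  exists y, A y /\ shell k y.
Proof.
move=> cA ubA Ax0 x0k.
apply: contrapT => H.
have [z [Az zk]] : exists z, A z /\ k.+1%:R < `|z|.
  apply: contrapT => H2; apply: ubA.
  rewrite /= /bounded_near; near=> N => y Ay /=.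
  have : `|y| <= k.+1%:R by rewrite leNgt; apply/negP => h; apply: H2; exists y.
  move/le_trans; apply; near: N; apply: nbhs_pinfty_ge; exact: num_real.
have nsh y : A y -> ~ (k%:R <= `|y| <= k.+1%:R).
  by move=> Ay h; apply: H; exists y.
pose B := A `&` [set y | `|y| < k%:R].
have : B = A.
  apply: cA.
  - exists x0; split => //=; rewrite lt_neqAle x0k andbT; apply/eqP => e.
    apply: (nsh x0 Ax0); rewrite e lexx /= ler_nat; exact: leqnSn.
  - exists [set y : X | `|y| < k%:R] => //.
    exact: ((continuousP _).1 (@norm_continuous R X) _ (@open_lt R k%:R)).
  - exists [set y : X | `|y| <= k%:R].
      exact: ((continuous_closedP _).1 (@norm_continuous R X) _ (@closed_le R k%:R)).
    apply/seteqP; split => y [Ay hy]; split => //=; first exact: ltW.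
    rewrite lt_neqAle hy andbT; apply/eqP => e.
    apply: (nsh y Ay); rewrite e lexx /= ler_nat; exact: leqnSn.
move=> eB; have : B z by rewrite eB.
move=> [_ /= zk']; move: zk; rewrite ltNge => /negP; apply.
apply: le_trans (ltW zk') _; rewrite ler_nat; exact: leqnSn.
Unshelve. all: by end_near.
Qed.
End S.
Arguments phi {R X n}.

Theorem lemma2 (R : realType) (X : normedModType R) (hX : findim X)
  (A : nat -> set X)
  (hA : forall n, ~ bounded_set (A n) /\ connected (A n)) :
  \bigcap_n A n = set0 \/
  exists K : nat, forall k : nat, (K <= k)%N ->
    forall e : R, 0 < e ->
      exists N : set nat, infinite_set N /\
        (@shell R X k `&` \bigcap_(n in N) enlarge (A n) e) !=set0.
Proof.
case: (pselect (\bigcap_n A n = set0)) => [h|h]; [by left|right].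
have [x0 hx0] : exists x, (\bigcap_n A n) x.
  apply: contrapT => H; apply: h; apply/seteqP; split => x // hx.
  by apply: H; exists x.
case: hX => n0 [b0 hb0].
have [m [b [hs hi]]] := @reduce R X _ _ hb0.
have [mm mm0 hlow] := @lower R X _ b hi.
exists (Num.truncn `|x0|).+1 => k hk e e0.
have x0k : `|x0| <= k%:R.
  apply: le_trans (ltW (truncnS_gt _)) _; rewrite ler_nat; exact: hk.
have /choice [a ha] : forall j, exists y, A j y /\ shell k y.
  move=> j; apply: (@shell_hit R X _ x0) => //; [exact: (hA j).2|exact: (hA j).1|].
  exact: hx0.
have /choice [cf hcf] : forall j, exists cc : 'rV[R]_m, phi b cc = a j.
  move=> j; have [c hc] := hs (a j); exists (\row_i c i).
  by rewrite hc /phi; apply: eq_bigr => i _; rewrite mxE.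
have bnd j : `|cf j| <= k.+1%:R / mm.
  rewrite ler_pdivlMr // mulrC; apply: le_trans (hlow _) _.
  rewrite hcf; have := (ha j).2; rewrite /shell /= => /andP[_ ->] //.
set L := \sum_(i < m) `|b i|.
have L0 : 0 <= L by apply: sumr_ge0 => i _.
have d0 : 0 < e / (L + 1) by rewrite divr_gt0 // ltr_wpDl.
have [N [hN hNd]] := @cluster_seq R _ cf _ _ bnd d0.
have [j0 Nj0] : exists j, N j.
  apply: contrapT => H; apply: hN; rewrite (_ : N = set0); first exact: finite_set0.
  by apply/seteqP; split => j // Nj; apply: H; exists j.
exists N; split => //; exists (a j0); split; first exact: (ha j0).2.
move=> j Nj; rewrite /enlarge /=.
apply: le_trans (@dist_le R X _ _ _ (ha j).1) _.
rewrite -!hcf -phiB; apply: le_trans (@phi_lip R X _ b _) _.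
apply: le_trans (ler_wpM2r L0 (ltW (hNd _ _ Nj0 Nj))) _.
by rewrite mulrAC ler_pdivrMr ?ltr_wpDl // ler_wpM2l ?lerDl // ltW.
Qed.
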